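(* Let $G$ be a finite abelian group, let $S\subseteq G$ be spectral, and let $H\le G$ be a subgroup such that $S$ determines every direction in $H$, i.e. for every nonzero $h\in H$ there is $w\in S-S$ with $w\sim h$. Then $|H|$ divides $|S|$.
   Context: For a finite abelian group $G=\bigoplus_i\mathbb{Z}_{n_i}$ with exponent $M$, let $\langle x,y\rangle=\sum_i\frac{M}{n_i}x_iy_i\in\mathbb{Z}_M$ and $\chi_g(x)=e^{2\pi i\langle x,g\rangle/M}$ for $g\in G$; $g\mapsto\chi_g$ identifies $G$ with its dual group. For a set $S$, $\chi(S)=\sum_{s\in S}\chi(s)$. A set $S\subseteq G$ is spectral if there is $\Lambda\subseteq G$ with $|\Lambda|=|S|$ and $\chi_{\lambda-\lambda'}(S)=0$ for all distinct $\lambda,\lambda'\in\Lambda$. For $v,w\in G$ write $v\sim w$ if $v$ and $w$ generate the same cyclic subgroup of $G$; the equivalence classes are called directions, and $S$ determines the direction of $v$ if some $w\in S-S$ satisfies $w\sim v$. *)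

(* Defs.v *)
From mathcomp Require Import all_boot all_order all_algebra all_field.
Set Implicit Arguments. Unset Strict Implicit. Unset Printing Implicit Defensive.
Import Order.TTheory GRing.Theory Num.Theory.
Local Open Scope ring_scope.

(* The group G = (+)_{i<k} Z_{m_i} with moduli m_i = (d i).+1 >= 1
   (every positive modulus is allowed; Z_1 is the trivial factor). *)
Definition grp (k : nat) (d : 'I_k -> nat) : finType :=
  {dffun forall i : 'I_k, 'I_(d i).+1}.

Section Grp.
Variables (k : nat) (d : 'I_k -> nat).
Local Notation G := (grp d).

Definition modulus (i : 'I_k) : nat := (d i).+1.

Definition gzero : G := [ffun i => (0 : 'I_(d i).+1)].
Definition gsub (x y : G) : G := [ffun i => (x i - y i : 'I_(d i).+1)].
Definition gmul (v : G) (m : nat) : G := [ffun i => (v i *+ m : 'I_(d i).+1)].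

Definition expo : nat := \big[lcmn/1%N]_(i < k) modulus i.

(* <x,g> = sum_i (M/n_i) x_i g_i  (taken as a natural number; only its
   class mod M matters, since the character value is omega^<x,g> with
   omega^M = 1) *)
Definition pairing (x g : G) : nat :=
  (\sum_(i < k) (expo %/ modulus i) * (x i : nat) * (g i : nat))%N.

(* omega = e^{2 pi i / M} in algC: M.-root (-1) is e^{i pi / M}. *)
Definition omega : algC := (expo.-root (-1)) ^+ 2.

Definition chi (g : G) (x : G) : algC := omega ^+ pairing x g.

Definition chi_sum (g : G) (S : {set G}) : algC := \sum_(s in S) chi g s.

Definition spectral (S : {set G}) : Prop :=
  exists Lam : {set G}, #|Lam| = #|S| /\
    forall l l', l \in Lam -> l' \in Lam -> l != l' ->
      chi_sum (gsub l l') S = 0.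

Definition diffset (S : {set G}) : {set G} :=
  [set gsub x y | x in S, y in S].

Definition same_dir (v w : G) : Prop :=
  forall x : G, (exists m, x = gmul v m) <-> (exists m, x = gmul w m).

Definition subgroup (H : {set G}) : Prop :=
  gzero \in H /\ forall x y, x \in H -> y \in H -> gsub x y \in H.

End Grp.

(* Main.v *)
Require Import Defs.
From mathcomp Require Import all_boot all_order all_algebra all_field.
Set Implicit Arguments. Unset Strict Implicit. Unset Printing Implicit Defensive.
Import Order.TTheory GRing.Theory Num.Theory.
Local Open Scope ring_scope.
Lemma col_orth (T : finType) (L S : {set T}) (a : T -> T -> algC) :
 #|L| = #|S| -> (forall l s, a l s * (a l s)^* = 1) ->
 (forall l l', l \in L -> l' \in L -> l != l' ->
    \sum_(s in S) a l s * (a l' s)^* = 0) ->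
 forall s t, s \in S -> t \in S -> s != t ->
    \sum_(l in L) a l s * (a l t)^* = 0.
Proof.
move=> cardLS nrm rows.
pose R l l' := \sum_(s in S) a l s * (a l' s)^*.
pose C s t := \sum_(l in L) a l s * (a l t)^*.
pose f l l' s t := a l s * (a l' s)^* * ((a l t)^* * a l' t).
have RR l l' : R l l' * (R l l')^* = \sum_(s in S) \sum_(t in S) f l l' s t.
  rewrite /R rmorph_sum /= big_distrlr /=; apply: eq_bigr => s _.
  by apply: eq_bigr => t _; rewrite /f rmorphM /= conjCK.
have CC s t : C s t * (C s t)^* = \sum_(l in L) \sum_(l' in L) f l l' s t.
  rewrite /C rmorph_sum /= big_distrlr /=; apply: eq_bigr => l _.
  by apply: eq_bigr => l' _; rewrite /f rmorphM /= conjCK mulrACA.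
have Rll l : R l l = #|S|%:R.
  by rewrite /R (eq_bigr (fun _ => 1)) ?sumr_const // => s _; rewrite nrm.
have Cll s : C s s = #|L|%:R.
  by rewrite /C (eq_bigr (fun _ => 1)) ?sumr_const // => l _; rewrite nrm.
have E1 : \sum_(l in L) \sum_(l' in L) R l l' * (R l l')^* = #|S|%:R ^+ 3.
  rewrite (eq_bigr (fun _ => #|S|%:R ^+ 2)).
    by rewrite sumr_const cardLS [RHS]exprSr mulr_natr.
  move=> l lL; rewrite (bigD1 l) //= big1 ?addr0.
    by rewrite Rll conjC_nat expr2.
  by move=> l' /andP[l'L ne]; rewrite /R rows ?mul0r // eq_sym.
have E2 : \sum_(l in L) \sum_(l' in L) R l l' * (R l l')^* =
          \sum_(s in S) \sum_(t in S) C s t * (C s t)^*.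
  under eq_bigr do under eq_bigr do rewrite RR.
  under [RHS]eq_bigr do under eq_bigr do rewrite CC.
  under eq_bigr do rewrite exchange_big.
  rewrite exchange_big.
  under eq_bigr do under eq_bigr do rewrite exchange_big.
  by under eq_bigr do rewrite exchange_big.
have E3 : \sum_(s in S) \sum_(t in S | t != s) C s t * (C s t)^* = 0.
  move: E2; rewrite E1.
  under [RHS]eq_bigr => s sS do rewrite (bigD1 s sS) /= Cll conjC_nat.
  rewrite big_split /= sumr_const cardLS.
  rewrite -(mulr_natr (#|S|%:R * #|S|%:R)) -expr2 -exprSr.
  move=> /(congr1 (fun x => x - #|S|%:R ^+ 3)); rewrite subrr (addrC (#|S|%:R ^+ 3)) addrK.
  by move=> H; symmetry; exact: H.
move=> s t sS tS st.
have H1 := psumr_eq0P _ E3.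
have H2 : \sum_(t in S | t != s) C s t * (C s t)^* = 0.
  apply: H1 => //= s' _; apply: sumr_ge0 => t' _; exact: mul_conjC_ge0.
have tP : (t \in S) && (t != s) by rewrite tS eq_sym st.
have /eqP := psumr_eq0P (fun t' _ => mul_conjC_ge0 _) H2 tP.
by rewrite mul_conjC_eq0 => /eqP.
Qed.

Section Basic.
Variables (k : nat) (d : 'I_k -> nat).
Local Notation G := (grp d).
Local Notation M := (expo d).
Local Notation w := (omega d).

Lemma expo_gt0 : (0 < M)%N.
Proof. by rewrite /expo; elim/big_ind: _ => // p q; rewrite lcmn_gt0 => -> ->. Qed.

Lemma dvd_mod_expo i : (modulus d i %| M)%N.
Proof. exact: (biglcmn_sup i). Qed.

Lemma omegaM : w ^+ M = 1.
Proof.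
rewrite /omega -exprM mulnC exprM rootCK ?expo_gt0 //.
by rewrite expr2 mulrNN mulr1.
Qed.

Lemma omega_mod a : w ^+ a = w ^+ (a %% M).
Proof.
by rewrite {1}(divn_eq a M) exprD mulnC exprM omegaM expr1n mul1r.
Qed.

Lemma omega_cong a b : (a = b %[mod M])%N -> w ^+ a = w ^+ b.
Proof. by move=> h; rewrite omega_mod h -omega_mod. Qed.

Lemma scale_cong n a b c : (n %| M)%N -> (a = b %[mod n])%N ->
  (M %/ n * c * a = M %/ n * c * b %[mod M])%N.
Proof.
move=> nM ab.
have E x : ((M %/ n * x) %% M = M %/ n * (x %% n))%N.
  by rewrite [RHS]mulnC muln_modl (mulnC n) divnK // mulnC.
by rewrite (mulnC (M %/ n)%N c) -!mulnA -[LHS]modnMmr -[RHS]modnMmr !E ab.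
Qed.

Lemma val_sub i (x y : 'I_(d i).+1) :
  ((x - y)%R + y = x %[mod modulus d i])%N.
Proof.
have /= {2}<- := congr1 val (subrK y x).
by rewrite /modulus modn_mod.
Qed.

Lemma val_mul i (x : 'I_(d i).+1) m :
  (((x *+ m)%R : nat) = (x * m) %% modulus d i)%N.
Proof. by rewrite Zp_mulrn. Qed.

Lemma pairingC (x y : G) : pairing x y = pairing y x.
Proof. by apply: eq_bigr => i _; rewrite mulnAC. Qed.

Lemma pairing_sub (s x y : G) :
  (pairing s (gsub x y) + pairing s y = pairing s x %[mod M])%N.
Proof.
rewrite /pairing -big_split /= -[LHS]modn_summ -[RHS]modn_summ; congr (_ %% _)%N.
apply: eq_bigr => i _; rewrite ffunE -mulnDr.
exact: scale_cong (dvd_mod_expo i) (val_sub (x i) (y i)).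
Qed.

Lemma pairing_mul (s v : G) m :
  (pairing s (gmul v m) = pairing s v * m %[mod M])%N.
Proof.
rewrite /pairing big_distrl /= -[LHS]modn_summ -[RHS]modn_summ; congr (_ %% _)%N.
apply: eq_bigr => i _; rewrite ffunE -[in RHS]mulnA.
apply: scale_cong (dvd_mod_expo i) _.
by rewrite val_mul modn_mod.
Qed.

Lemma pairing0 (s : G) : pairing s (gzero d) = 0%N.
Proof. by rewrite /pairing big1 // => i _; rewrite ffunE muln0. Qed.

Lemma unit_norm (z : algC) n : (0 < n)%N -> z ^+ n = 1 -> z * z^* = 1.
Proof.
move=> n0 zn.
have : `|z| ^+ n = 1 by rewrite -normrX zn normr1.
move/eqP; rewrite pexpr_eq1 // => /eqP nz.
by rewrite -normCK nz expr1n.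
Qed.

Lemma omega_norm a : w ^+ a * (w ^+ a)^* = 1.
Proof.
apply: (unit_norm expo_gt0).
by rewrite -exprM mulnC exprM omegaM expr1n.
Qed.

Lemma chiC (g x : G) : chi g x = chi x g.
Proof. by rewrite /chi pairingC. Qed.

Lemma chi_norm (g x : G) : chi g x * (chi g x)^* = 1.
Proof. exact: omega_norm. Qed.

Lemma chi0 (x : G) : chi (gzero d) x = 1.
Proof. by rewrite /chi pairing0. Qed.

Lemma chi_sub (x y s : G) : chi (gsub x y) s = chi x s * (chi y s)^*.
Proof.
have E : chi (gsub x y) s * chi y s = chi x s.
  by rewrite /chi -exprD; apply: omega_cong; apply: pairing_sub.
by rewrite -E -mulrA chi_norm mulr1.
Qed.

Lemma chi_mul (v s : G) m : chi (gmul v m) s = chi v s ^+ m.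
Proof.
by rewrite /chi -exprM; apply: omega_cong; apply: pairing_mul.
Qed.

Lemma gsub_inj (y : G) : injective (fun x => gsub x y).
Proof.
move=> x x' /= /ffunP E; apply/ffunP => i; have := E i; rewrite !ffunE.
exact: subIr.
Qed.

Lemma gsubxx (x : G) : gsub x x = gzero d.
Proof. by apply/ffunP => i; rewrite !ffunE subrr. Qed.

Lemma gmul1 (x : G) : gmul x 1 = x.
Proof. by apply/ffunP => i; rewrite !ffunE mulr1n. Qed.

Lemma gmul0 (x : G) : gmul x 0 = gzero d.
Proof. by apply/ffunP => i; rewrite !ffunE mulr0n. Qed.

Lemma gmul0g m : gmul (gzero d) m = gzero d.
Proof. by apply/ffunP => i; rewrite !ffunE mul0rn. Qed.

Lemma gmulA (x : G) a b : gmul (gmul x a) b = gmul x (a * b).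
Proof. by apply/ffunP => i; rewrite !ffunE mulrnA. Qed.

Lemma gmul_fix (x : G) e : gmul x e.+1 = x -> gmul x e = gzero d.
Proof.
move/ffunP => E; apply/ffunP => i; have := E i; rewrite !ffunE mulrSr.
rewrite -[in RHS](add0r (x i)) => H; exact: addIr H.
Qed.
End Basic.

Lemma subgroup_sum (k : nat) (d : 'I_k -> nat) (H : {set grp d}) (l : grp d) :
  subgroup H ->
  \sum_(h in H) chi l h = if [forall h in H, chi l h == 1] then #|H|%:R else 0.
Proof.
case=> H0 Hsub; case: ifP => [/forall_inP all1 | ].
  by rewrite (eq_bigr (fun _ => 1)) ?sumr_const // => h hH; exact/eqP/all1.
move/negbT; rewrite negb_forall_in => /exists_inP[h0 h0H c1].
have EX : \sum_(h in H) chi l h = (\sum_(h in H) chi l h) * (chi l h0)^*.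
  rewrite mulr_suml.
  have imH : [set gsub h h0 | h in H] = H.
    apply/eqP; rewrite eqEcard card_in_imset; last first.
      by move=> x y _ _ /gsub_inj.
    rewrite leqnn andbT; apply/subsetP => x /imsetP[h hH ->]; exact: Hsub.
  rewrite -{1}imH big_imset /=; last by move=> x y _ _ /gsub_inj.
  by apply: eq_bigr => h _; rewrite chiC chi_sub !(chiC l).
have : (\sum_(h in H) chi l h) * (1 - (chi l h0)^*) = 0.
  by rewrite mulrBr mulr1 -EX subrr.
move/eqP; rewrite mulf_eq0 subr_eq0 => /orP[/eqP // | /eqP E].
have : chi l h0 = 1 by rewrite -[chi l h0]conjCK -E conjC1.
by move/eqP; rewrite (negPf c1).
Qed.

Theorem corollary3p2 (k : nat) (d : 'I_k -> nat) (S H : {set grp d}) :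
  spectral S ->
  subgroup H ->
  (forall h, h \in H -> h != gzero d ->
     exists2 w, w \in diffset S & same_dir w h) ->
  (#|H| %| #|S|)%N.
Proof.
move=> [Lam [cardL orth]] subH dirs; have [H0 Hsub] := subH.
have dual : forall s t, s \in S -> t \in S -> s != t ->
    \sum_(l in Lam) chi l s * (chi l t)^* = 0.
  apply: (col_orth (a := fun l s => chi l s)) => //.
    by move=> l s; exact: chi_norm.
  move=> l l' lL l'L ne; rewrite -[RHS](orth l l' lL l'L ne) /chi_sum.
  by apply: eq_bigr => s _; rewrite chi_sub.
have Fh : forall h, h \in H -> h != gzero d -> \sum_(l in Lam) chi h l = 0.
  move=> h hH hn0; have [w0 /imset2P[s t sS tS ->] sd] := dirs h hH hn0.
  have [m hm] : exists m, h = gmul (gsub s t) m.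
    by apply/(sd h).2; exists 1%N; rewrite gmul1.
  have [m' wm] : exists m, gsub s t = gmul h m.
    by apply/(sd _).1; exists 1%N; rewrite gmul1.
  have wfix : gmul (gsub s t) (m * m') = gsub s t by rewrite -gmulA -hm -wm.
  have st : s != t.
    by apply: contraNneq hn0 => st; rewrite hm st gsubxx gmul0g.
  case E: (m * m')%N wfix => [|e] wfix.
    move: wfix; rewrite gmul0 => w0'.
    by case/eqP: hn0; rewrite hm -w0' gmul0g.
  have we : gmul (gsub s t) e = gzero d by apply: gmul_fix.
  have cop : coprime m e.
    by rewrite coprime_sym; apply: (coprime_dvdr _ (coprimenS e)); rewrite -E dvdn_mulr.
  have [u Hu] := Qn_aut_exists cop.
  have Fw : \sum_(l in Lam) chi (gsub s t) l = 0.
    rewrite -[RHS](dual s t sS tS st); apply: eq_bigr => l _.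
    by rewrite chi_sub (chiC s) (chiC t).
  rewrite hm (eq_bigr (fun l => u (chi (gsub s t) l))); last first.
    by move=> l _; rewrite chi_mul Hu // -chi_mul we chi0.
  by rewrite -rmorph_sum Fw rmorph0.
have sumH : \sum_(h in H) \sum_(l in Lam) chi h l = #|Lam|%:R.
  rewrite (bigD1 (gzero d)) //= [X in _ + X]big1 ?addr0.
    by rewrite (eq_bigr (fun _ => 1)) ?sumr_const // => l _; rewrite chi0.
  by move=> h /andP[hH hn0]; apply: Fh.
move: sumH; rewrite exchange_big.
under eq_bigr do under eq_bigr do rewrite chiC.
under eq_bigr do rewrite subgroup_sum //.
rewrite -big_mkcondr sumr_const -(mulr_natr (#|H|%:R : algC)) -natrM => /eqP; rewrite eqr_nat => /eqP E.
by rewrite -cardL -E dvdn_mulr.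
Qed.
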